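(* Let $d>k\ge 0$ be integers. Then $f(k,d)\le \frac{k+2}{d+3}$.
   Context: For a graph $G=(V,E)$ and an integer $k\ge 0$, a $k$-independent set is a set $S\subseteq V$ such that the induced subgraph $G[S]$ has maximum degree at most $k$; $\alpha_k(G)$ denotes the maximum cardinality of a $k$-independent set of $G$. $n(G)$ is the number of vertices and $d(G)=2|E(G)|/n(G)$ the average degree. For integers $d,k\ge 0$, $f(k,d)=\inf\left\{\frac{\alpha_k(G)}{n(G)} : G \text{ a finite simple graph with at least one vertex and } d(G)\le d\right\}$. *)

(* Defs.v *)
From HB Require Import structures.
From mathcomp Require Import all_boot all_order all_algebra.
Set Implicit Arguments. Unset Strict Implicit. Unset Printing Implicit Defensive.
Import Order.TTheory GRing.Theory Num.Theory.

Section Graphs.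
Variable T : finType.

Definition simple_graph (e : rel T) : Prop := irreflexive e /\ symmetric e.

Definition edges (e : rel T) : {set {set T}} :=
  [set A : {set T} | [exists x, exists y, e x y && (A == [set x; y])]].

Definition avg_degree (e : rel T) : rat :=
  ((2 * #|edges e|)%:R / (#|T|)%:R)%R.

Definition k_independent (e : rel T) (k : nat) (S : {set T}) : bool :=
  [forall x in S, #|[set y in S | e x y]| <= k].

Definition alpha_k (e : rel T) (k : nat) : nat :=
  \max_(S : {set T} | k_independent e k S) #|S|.

End Graphs.

(* Main.v *)
Require Import Defs.
From HB Require Import structures.
From mathcomp Require Import all_boot all_order all_algebra.
From mathcomp Require Import zify.
Import Order.TTheory GRing.Theory Num.Theory.

Section Cyc.
Variable d : nat.
Hypothesis d1 : (0 < d)%N.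
Local Notation n := d.+3.

Definition cyc (a b : nat) : bool := (b == a.+1) || ((a == d.+2) && (b == 0)).
Definition ce : rel 'I_n := fun x y => (x != y) && ~~ cyc x y && ~~ cyc y x.
Definition sx (x : 'I_n) : 'I_n := inord (if nat_of_ord x == d.+2 then 0 else (nat_of_ord x).+1).
Definition px (x : 'I_n) : 'I_n := inord (if nat_of_ord x == 0 then d.+2 else (nat_of_ord x).-1).

Lemma val_sx x : nat_of_ord (sx x) = (if nat_of_ord x == d.+2 then 0 else (nat_of_ord x).+1).
Proof.
rewrite /sx inordK //; have := ltn_ord x; case: eqP => /= h; lia.
Qed.
Lemma val_px x : nat_of_ord (px x) = (if nat_of_ord x == 0 then d.+2 else (nat_of_ord x).-1).
Proof.
rewrite /px inordK //; have := ltn_ord x; case: eqP => /= h; lia.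
Qed.

Lemma cyc_sx (x y : 'I_n) : cyc x y = (y == sx x).
Proof.
apply/idP/idP.
- rewrite /cyc => /orP [/eqP h | /andP [/eqP h1 /eqP h2]]; apply/eqP/val_inj;
  rewrite /= val_sx; have := ltn_ord x; have := ltn_ord y; case: eqP => /= h3; lia.
- move/eqP => ->; rewrite /cyc val_sx; case: (nat_of_ord x =P d.+2) => h /=.
  + by rewrite ?eqxx ?orbT.
  + by rewrite ?eqxx ?orbT.
Qed.

Lemma cyc_px (x y : 'I_n) : cyc y x = (y == px x).
Proof.
apply/idP/idP.
- rewrite /cyc => /orP [/eqP h | /andP [/eqP h1 /eqP h2]]; apply/eqP/val_inj;
  rewrite /= val_px; have := ltn_ord x; have := ltn_ord y; case: eqP => /= h3; lia.
- move/eqP => ->; rewrite /cyc val_px; have := ltn_ord x => hx.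
  case: (nat_of_ord x =P 0) => h /=; [rewrite h /= | ].
  + by rewrite eqxx.
  + apply/orP; left; apply/eqP; lia.
Qed.

Lemma ce_sym : symmetric ce.
Proof. move=> x y; rewrite /ce /= [y == x]eq_sym; case: (cyc x y); case: (cyc y x); rewrite /= ?andbF //. Qed.

Lemma ce_irr : irreflexive ce.
Proof. by move=> x; rewrite /ce eqxx. Qed.

Lemma nce_sub x : [set y | ~~ ce x y] \subset [set x; sx x; px x].
Proof.
apply/subsetP => y; rewrite !inE /ce cyc_sx cyc_px negb_and !negbK.
by rewrite negb_and !negbK (eq_sym x y); case: (y == x); case: (y == sx x).
Qed.

Lemma card3 x : #|[set x; sx x; px x]| = 3.
Proof.
rewrite -setUA cardsU1 cards2 !inE.
have hx := ltn_ord x.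
have e1 : (x == sx x) = false by apply/negP => /eqP /(congr1 (@nat_of_ord _)); rewrite val_sx; case: eqP => /= h; lia.
have e2 : (x == px x) = false by apply/negP => /eqP /(congr1 (@nat_of_ord _)); rewrite val_px; case: eqP => /= h; lia.
have e3 : (sx x == px x) = false.
  by apply/negP => /eqP /(congr1 (@nat_of_ord _)); rewrite val_sx val_px; do 2 case: eqP => /= ?; lia.
by rewrite e1 e2 e3.
Qed.

Lemma nce_eq x : [set y | ~~ ce x y] = [set x; sx x; px x].
Proof.
apply/eqP; rewrite eqEsubset nce_sub /=; apply/subsetP => y.
rewrite !inE /ce cyc_sx cyc_px => /orP [/orP [] | ] /eqP ->; rewrite ?eqxx //= ?andbF //.
Qed.

Lemma deg_le x : #|[set y | ce x y]| <= d.
Proof.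
have := cardsC [set y | ce x y]; rewrite card_ord.
have -> : ~: [set y | ce x y] = [set y | ~~ ce x y] by apply/setP => y; rewrite !inE.
rewrite nce_eq card3; lia.
Qed.


Lemma iter_sx (x0 : 'I_n) m : nat_of_ord (iter m sx x0) = (x0 + m) %% n.
Proof.
elim: m => [|m IH]; first by rewrite addn0 modn_small.
rewrite iterS val_sx IH addnS -[(x0 + m).+1]addn1 -(modnDml (x0 + m) 1 n); case: eqP => h.
- by rewrite h addn1 modnn.
- have hz := ltn_pmod (x0 + m) (isT : 0 < n)%N; move: h hz; set z := (x0 + m) %% n => h hz.
  rewrite modn_small; lia.
Qed.

Lemma alpha_bound k (S : {set 'I_n}) : (k < d)%N -> k_independent ce k S -> #|S| <= k.+2.
Proof.
move=> kd /forallP hS.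
have split x : x \in S -> #|S| = #|[set y in S | ce x y]| + #|S :&: [set x; sx x; px x]|.
  move=> _; rewrite -nce_eq setIdE -(cardsID [set y | ce x y] S); congr (_ + _).
  by rewrite setDE; apply: eq_card => y; rewrite !inE.
have hk x : x \in S -> #|[set y in S | ce x y]| <= k by move=> xS; have := hS x; rewrite xS.
have le3 x : x \in S -> #|S| <= k + 3.
  move=> xS; rewrite (split x xS) leq_add // ?hk // -(card3 x) subset_leq_card // subsetIr //.
rewrite leqNgt; apply/negP => big.
have clos x : x \in S -> sx x \in S.
  move=> xS; apply/negPn/negP => nS.
  have : #|S :&: [set x; sx x; px x]| <= 2.
    apply: leq_trans (_ : #|[set x; px x]| <= 2); last by rewrite cards2; case: (_ != _).
    apply/subset_leq_card/subsetP => y; rewrite !inE => /andP [yS /orP [/orP [] | ]] /eqP hy;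
      rewrite hy ?eqxx ?orbT //; by rewrite -hy yS in nS.
  have := split x xS; have := hk x xS; lia.
have [x0 x0S] : exists x0, x0 \in S.
  by apply/set0Pn; rewrite -card_gt0; lia.
have allS y : y \in S.
  have -> : y = iter (y + n - x0) sx x0.
    apply/val_inj => /=; rewrite iter_sx; have := ltn_ord y; have := ltn_ord x0 => h1 h2.
    have -> : x0 + (y + n - x0) = y + n by lia.
    by rewrite modnDr modn_small.
  by elim: (y + n - x0) => [|m IH] //=; apply: clos.
have := le3 x0 x0S; have -> : S = setT by apply/setP => y; rewrite inE allS.
rewrite cardsT card_ord; lia.
Qed.

End Cyc.

Lemma edges_bound (T : finType) (e : rel T) (D : nat) :
  irreflexive e -> symmetric e -> (forall x, #|[set y | e x y]| <= D) ->
  2 * #|edges e| <= #|T| * D.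
Proof.
move=> irr sym hD.
have h2 : forall A, A \in edges e -> #|A| = 2.
  move=> A; rewrite inE => /existsP [a /existsP [b /andP [hab /eqP ->]]].
  rewrite cards2; case: eqP => // hb; by rewrite hb irr in hab.
have -> : 2 * #|edges e| = \sum_(A in edges e) \sum_(x : T) (x \in A : nat).
  rewrite mulnC -sum_nat_const; apply: eq_bigr => A hA.
  by rewrite -(h2 A hA) -sum1_card big_mkcond.
rewrite exchange_big /=.
have -> : #|T| * D = \sum_(x : T) D by rewrite big_const iter_addn_0 mulnC cardE.
apply: leq_sum => x _.
rewrite (eq_bigr (fun A : {set T} => if x \in A then 1 else 0)); last by move=> A _; case: (x \in A).
rewrite -big_mkcondr sum1_card.
apply: leq_trans (hD x).
apply: leq_trans (leq_imset_card (fun y => [set x; y]) _).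
apply/subset_leq_card/subsetP => A; rewrite unfold_in /= => /andP [] HA; move: HA; rewrite inE.
move=> /existsP [a /existsP [b /andP [hab /eqP ->]]].
rewrite !inE => /orP [] /eqP hx; rewrite -hx in hab *.
- by apply: (imset_f (fun y => [set x; y])); rewrite inE.
- by rewrite setUC; apply: (imset_f (fun y => [set x; y])); rewrite inE sym.
Qed.

Theorem mainTheorem10 (k d : nat) : (k < d)%N ->
  forall eps : rat, (0 < eps)%R ->
  exists (n : nat) (e : rel 'I_n),
    [/\ (0 < n)%N, simple_graph e,
        (avg_degree e <= d%:R)%R &
        ((alpha_k e k)%:R / n%:R <= (k + 2)%:R / (d + 3)%:R + eps)%R].
Proof.
move=> kd eps eps0.
have d1 : (0 < d)%N by lia.
exists d.+3, (ce d); split => //.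
- split; [exact: ce_irr | exact: ce_sym].
- rewrite /avg_degree card_ord ler_pdivrMr ?ltr0n // -natrM ler_nat.
  have := @edges_bound _ (ce d) d (@ce_irr d) (@ce_sym d) (@deg_le d d1); rewrite card_ord; lia.
- have ha : (alpha_k (ce d) k <= k + 2)%N.
    rewrite /alpha_k; apply/bigmax_leqP => S hS; rewrite addn2; exact: alpha_bound.
  rewrite addn3; apply: ler_wpDr; first exact: ltW.
  by rewrite ler_wpM2r ?invr_ge0 ?ler0n // ler_nat.
Qed.
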